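(* Let $R$ be a Noetherian ring. Then the set $\mathrm{Princ}(R)$ of principal ideals of $R$ is dense in $\mathcal I(R)$ with respect to the constructible topology if and only if $R$ is a principal ideal ring.
   Context: $\mathcal I(R)$ is the set of ideals of $R$ with the Zariski topology having basis of open sets $\mathcal B(x_1,\ldots,x_n):=\{I\in\mathcal I(R)\mid x_1,\ldots,x_n\in I\}$; it is a spectral space. The constructible topology is the coarsest topology in which all open quasi-compact subsets of $\mathcal I(R)$ are clopen. *)

(* Defs.v *)
From Stdlib Require List.
From mathcomp Require Import all_boot all_algebra.
Set Implicit Arguments. Unset Strict Implicit. Unset Printing Implicit Defensive.
Import GRing.Theory.
Local Open Scope ring_scope.

Definition is_topology (T : Type) (O : (T -> Prop) -> Prop) : Prop :=
  [/\ O (fun _ => True),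
      (forall U V, O U -> O V -> O (fun x => U x /\ V x))
    & (forall C : (T -> Prop) -> Prop, (forall U, C U -> O U) ->
         O (fun x => exists2 U, C U & U x))].

Definition generated_topology (T : Type) (S : (T -> Prop) -> Prop)
  : (T -> Prop) -> Prop :=
  fun U => forall O, is_topology O -> (forall V, S V -> O V) -> O U.

Definition quasi_compact (T : Type) (O : (T -> Prop) -> Prop) (U : T -> Prop) :=
  forall C : (T -> Prop) -> Prop, (forall V, C V -> O V) ->
    (forall x, U x -> exists2 V, C V & V x) ->
    exists s : seq (T -> Prop), (forall V, List.In V s -> C V) /\
      (forall x, U x -> exists2 V, List.In V s & V x).

Definition dense_in (T : Type) (O : (T -> Prop) -> Prop) (P : T -> Prop) :=
  forall U, O U -> (exists x, U x) -> exists x, U x /\ P x.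

Definition is_ideal (R : comPzRingType) (I : R -> Prop) : Prop :=
  [/\ I 0, (forall x y, I x -> I y -> I (x + y)) & (forall a x, I x -> I (a * x))].

Record ideal (R : comPzRingType) := Ideal {
  icarrier :> R -> Prop ;
  iprop : is_ideal icarrier }.

Definition principal (R : comPzRingType) (I : R -> Prop) : Prop :=
  exists a : R, forall x, I x <-> exists r : R, x = r * a.

Definition Princ (R : comPzRingType) : ideal R -> Prop := fun I => principal I.

Definition principal_ideal_ring (R : comPzRingType) : Prop :=
  forall I : R -> Prop, is_ideal I -> principal I.

Definition noetherian (R : comPzRingType) : Prop :=
  forall f : nat -> (R -> Prop), (forall n, is_ideal (f n)) ->
    (forall n x, f n x -> f n.+1 x) ->
    exists N, forall n x, (N <= n)%N -> f n x -> f N x.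

Definition zbasic (R : comPzRingType) (s : seq R) : ideal R -> Prop :=
  fun I => forall x, List.In x s -> I x.

Definition zariski_open (R : comPzRingType) (U : ideal R -> Prop) : Prop :=
  forall I, U I -> exists s : seq R, zbasic s I /\ (forall J, zbasic s J -> U J).

Definition constructible_open (R : comPzRingType) : (ideal R -> Prop) -> Prop :=
  generated_topology (fun W => exists U : ideal R -> Prop,
    [/\ zariski_open U, quasi_compact (@zariski_open R) U &
        (W = U \/ W = (fun I => ~ U I))]).

(* Main.v *)
Require Import Defs.
From mathcomp Require Import all_boot all_algebra.
From mathcomp Require Import ring.
From Stdlib Require Import Classical ClassicalEpsilon.
Set Implicit Arguments. Unset Strict Implicit. Unset Printing Implicit Defensive.
Import GRing.Theory.
Local Open Scope ring_scope.

Fixpoint gen (R : comPzRingType) (s : seq R) : R -> Prop :=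
  match s with
  | [::] => fun x => x = 0
  | a :: s' => fun x => exists r y, gen s' y /\ x = r * a + y
  end.

Fixpoint Jgen (R : comPzRingType) (J : R -> Prop) (s : seq R) : R -> Prop :=
  match s with
  | [::] => fun x => x = 0
  | a :: s' => fun x => exists j y, J j /\ Jgen J s' y /\ x = j * a + y
  end.

Lemma gen_ideal (R : comPzRingType) (s : seq R) : is_ideal (gen s).
Proof.
elim: s => [|a s [h0 hD hM]] /=.
  split => //; [move=> x y -> ->; ring | move=> a x ->; ring].
split.
- exists 0, 0; split => //; ring.
- move=> x y [r1 [y1 [h1 ->]]] [r2 [y2 [h2 ->]]].
  exists (r1 + r2), (y1 + y2); split; [exact: hD | ring].
- move=> b x [r [y [h ->]]]; exists (b * r), (b * y); split; [exact: hM | ring].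
Qed.

Lemma Jgen_ideal (R : comPzRingType) (J : R -> Prop) (s : seq R) :
  is_ideal J -> is_ideal (Jgen J s).
Proof.
move=> [J0 JD JM].
elim: s => [|a s [h0 hD hM]] /=.
  split => //; [move=> x y -> ->; ring | move=> a x ->; ring].
split.
- exists 0, 0; split => //; split => //; ring.
- move=> x y [r1 [y1 [j1 [h1 ->]]]] [r2 [y2 [j2 [h2 ->]]]].
  exists (r1 + r2), (y1 + y2); split; [exact: JD | split; [exact: hD | ring]].
- move=> b x [r [y [j [h ->]]]]; exists (b * r), (b * y).
  split; [exact: JM | split; [exact: hM | ring]].
Qed.

Lemma gen_in (R : comPzRingType) (s : seq R) x : List.In x s -> gen s x.
Proof.
elim: s => [|a s IH] //= [<-|hx].
- exists 1, 0; split; [by case: (gen_ideal s) | ring].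
- exists 0, x; split; [exact: IH | ring].
Qed.

Lemma gen_min (R : comPzRingType) (s : seq R) (I : R -> Prop) :
  is_ideal I -> (forall x, List.In x s -> I x) -> forall x, gen s x -> I x.
Proof.
move=> [I0 ID IM]; elim: s => [|a s IH] hs x /=; first by move->.
move=> [r [y [hy ->]]]; apply: (ID); first by apply: (IM); apply: (hs); left.
by apply: (IH) => // z hz; apply: (hs); right.
Qed.

Lemma gen_Jgen (R : comPzRingType) (J : R -> Prop) (s : seq R) j y :
  is_ideal J -> J j -> gen s y -> Jgen J s (j * y).
Proof.
move=> [J0 JD JM] hj; elim: s y => [|a s IH] y /=; first by move->; ring.
move=> [r [y' [hy ->]]]; exists (r * j), (j * y'); split; first exact: JM.
split; [exact: IH | ring].
Qed.

Lemma nakayama_aux (R : comPzRingType) (J : R -> Prop) (s : seq R) :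
  is_ideal J ->
  forall t, (forall x, List.In x t -> List.In x s) ->
  (exists u, J (1 - u) /\ forall x, List.In x s -> Jgen J t (u * x)) ->
  exists u, J (1 - u) /\ forall x, List.In x s -> u * x = 0.
Proof.
move=> hJ; case: (hJ) => J0 JD JM.
elim=> [|a t IH] ht [u [hu hx]]; first by exists u.
apply: (IH); first by move=> x hx'; apply: (ht); right.
have := hx a (ht a (or_introl erefl)) => -[j1 [y [hj1 [hy e]]]].
have [K0 KD KM] := Jgen_ideal t hJ.
exists ((u - j1) * u); split.
- have -> : 1 - (u - j1) * u = (1 - u) + j1 + (u - j1) * (1 - u) by ring.
  apply: (JD); [exact: JD | exact: JM].
- move=> x hxs; have := hx x hxs => -[j' [y' [hj' [hy' e']]]].
  have -> : (u - j1) * u * x = j' * ((u - j1) * a) + (u - j1) * y'.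
    by rewrite -mulrA e'; ring.
  apply: (KD); last exact: KM.
  have -> : (u - j1) * a = y by rewrite mulrBl e; ring.
  exact: KM.
Qed.

Lemma nakayama (R : comPzRingType) (J : R -> Prop) (s : seq R) :
  is_ideal J -> (forall x, List.In x s -> Jgen J s x) ->
  exists j, J j /\ forall x, gen s x -> (1 - j) * x = 0.
Proof.
move=> hJ hs; have [J0 _ _] := hJ.
have [] := @nakayama_aux R J s hJ s (fun x h => h).
  by exists 1; split; [rewrite subrr | move=> x hx; rewrite mul1r; exact: hs].
move=> u [hu hux]; exists (1 - u); split => // x hx.
have -> : 1 - (1 - u) = u by ring.
apply: (@gen_min R s (fun x => u * x = 0)) => //.
split; [by rewrite mulr0 | by move=> a b ha hb; rewrite mulrDr ha hb addr0 | move=> a b ha].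
by rewrite mulrCA ha mulr0.
Qed.

Lemma exists_max (R : comPzRingType) (hR : noetherian R)
  (P : (R -> Prop) -> Prop) (HP : forall J, P J -> is_ideal J) I0 (h0 : P I0) :
  exists I, P I /\ forall J, P J -> (forall x, I x -> J x) -> forall x, J x -> I x.
Proof.
apply: NNPP => H.
have H' : forall I, P I -> exists J, P J /\ (forall x, I x -> J x) /\
            exists x, J x /\ ~ I x.
  move=> I hI; apply: NNPP => hn; apply: (H); exists I; split => // J hJ hIJ x hx.
  apply: NNPP => hnx; apply: (hn); exists J; split => //; split => //.
  by exists x.
pose next (I : R -> Prop) := epsilon (inhabits I0)
  (fun J => P J /\ (forall x, I x -> J x) /\ exists x, J x /\ ~ I x).
pose f := fix f (n : nat) := match n with 0%N => I0 | m.+1 => next (f m) end.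
have hf : forall n, P (f n) /\ (forall x, f n x -> f n.+1 x) /\
            exists x, f n.+1 x /\ ~ f n x.
  elim=> [|n [hn _]].
    split; first exact: h0.
    exact: (epsilon_spec (inhabits I0) _ (H' I0 h0)).2.
  have hn1 := epsilon_spec (inhabits I0) _ (H' _ hn).
  have [hP _] := hn1.
  split; first exact: hP.
  exact: (epsilon_spec (inhabits I0) _ (H' _ hP)).2.
have [N hN] := hR f (fun n => HP _ (hf n).1) (fun n => (hf n).2.1).
have [x [hx1 hx2]] := (hf N).2.2.
by apply: (hx2); apply: (hN N.+1) => //; exact: leqnSn.
Qed.

Lemma fin_gen (R : comPzRingType) (hR : noetherian R) (I : R -> Prop) :
  is_ideal I -> exists s, forall x, I x <-> gen s x.
Proof.
move=> hI; have [I0 ID IM] := hI.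
have HP : forall J, (exists t, J = gen t /\ forall x, gen t x -> I x) -> is_ideal J.
  by move=> J [t [-> _]]; exact: gen_ideal.
have h0 : exists t, gen [::] = gen t /\ forall x, gen t x -> I x.
  by exists [::]; split => // x /= ->.
have [M [[t [-> ht]] hmax]] := @exists_max R hR _ HP _ h0.
exists t => x; split; last exact: ht.
move=> hx; apply: (hmax (gen (x :: t))).
- exists (x :: t); split => //; apply: gen_min => // y [<-|hy] //.
  by apply: (ht); apply: gen_in.
- move=> y hy; exists 0, y; split => //; ring.
- by apply: gen_in; left.
Qed.

Lemma zbasic_open (R : comPzRingType) (s : seq R) :
  zariski_open (zbasic s) /\ quasi_compact (@zariski_open R) (zbasic s).
Proof.
split; first by move=> I hI; exists s; split.
move=> C hC hcov.
pose G := @Ideal R (gen s) (gen_ideal s).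
have hG : zbasic s G by move=> x hx; apply: gen_in.
have [V hV hVG] := hcov G hG.
have [t [ht htV]] := hC V hV G hVG.
exists [:: V]; split; first by move=> W [<-|[]].
move=> J hJ; exists V; first by left.
apply: (htV) => y hy; apply: (@gen_min R s J (iprop J)) => //.
exact: ht.
Qed.

Theorem proposition5p7 (R : comPzRingType) (hR : noetherian R) :
  dense_in (@constructible_open R) (@Princ R) <-> principal_ideal_ring R.
Proof.
split; last first.
  move=> hP U hU [x hx]; exists x; split => //; exact: hP _ (iprop x).
move=> hD; apply: (@NNPP (principal_ideal_ring R)) => hnP.
have [I0 [hI0 hnI0]] : exists I : R -> Prop, is_ideal I /\ ~ principal I.
  case: (classic (exists I : R -> Prop, is_ideal I /\ ~ principal I)) => // hn.
  exfalso; apply: (hnP) => I hI; case: (classic (principal I)) => // hnI.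
  by exfalso; apply: (hn); exists I.
have [I [[hI hnI] hmax]] := @exists_max R hR
  (fun J => is_ideal J /\ ~ principal J) (fun J h => h.1) I0 (conj hI0 hnI0).
have [I_0 ID IM] := hI.
have SP : forall J : R -> Prop, is_ideal J -> (forall x, I x -> J x) ->
    (exists x, J x /\ ~ I x) -> principal J.
  move=> J hJ hIJ [x [hx hnx]]; apply: NNPP => hnJ.
  by apply: (hnx); apply: (hmax J (conj hJ hnJ)).
have L : forall e, (forall x, I x -> exists r, x = r * e) ->
    forall x, I x -> exists y, I y /\ x = y * e.
  move=> e he.
  have hQ : forall y, I (y * e) -> I y.
    move=> y hy; apply: NNPP => hny.
    have hQi : is_ideal (fun y => I (y * e)).
      split; [by rewrite mul0r | by move=> a b ha hb; rewrite mulrDl; apply: (ID) |].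
      by move=> a b hb; rewrite -mulrA; apply: (IM).
    have [f hf] := SP _ hQi (fun x hx => eq_ind _ I (IM e x hx) _ (mulrC e x)) (ex_intro _ y (conj hy hny)).
    apply: (hnI); exists (f * e) => x; split.
    + move=> hx; have [r hr] := he x hx.
      have : I (r * e) by rewrite -hr.
      move/hf => [r' hr']; exists r'; by rewrite hr hr' mulrA.
    + move=> [r ->]; apply: (IM); apply/hf; exists 1; by rewrite mul1r.
  move=> x hx; have [r hr] := he x hx; exists r; split => //.
  by apply: (hQ); rewrite -hr.
have [s hs] := fin_gen hR hI.
have hsI : forall x, List.In x s -> I x by move=> x hx; apply/hs; apply: gen_in.
have I1 : ~ I 1.
  move=> h1; apply: (hnI); exists 1 => x; split.
  - by move=> hx; exists x; rewrite mulr1.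
  - by move=> [r ->]; exact: IM _ _ h1.
have K : forall J : R -> Prop, is_ideal J -> (forall x, I x -> J x) ->
    (exists x, J x /\ ~ I x) -> J 1.
  move=> J hJ hIJ hxJ.
  have [d hd] := SP J hJ hIJ hxJ.
  have hdI : forall x, I x -> exists r, x = r * d by move=> x /hIJ /hd.
  have hdJ : is_ideal (fun j => exists r, j = r * d).
    split; first by exists 0; rewrite mul0r.
      by move=> a b [r1 ->] [r2 ->]; exists (r1 + r2); rewrite mulrDl.
    by move=> a b [r ->]; exists (a * r); rewrite mulrA.
  have hN1 : forall x, List.In x s -> Jgen (fun j => exists r, j = r * d) s x.
    move=> x hx; have [y [hy ->]] := L d hdI x (hsI x hx).
    rewrite mulrC; apply: gen_Jgen => //; last by apply/hs.
    by exists 1; rewrite mul1r.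
  have [j [[r hr] hj]] := @nakayama R _ s hdJ hN1.
  have hc : forall y, I y -> (1 - j) * y = 0 by move=> y /hs; apply: (hj).
  have [J0 JD JM] := hJ.
  have hJd : forall r, J (r * d) by move=> r'; apply: (JM); apply/hd; exists 1; rewrite mul1r.
  case: (classic (I (1 - j))) => hcI.
    have -> : (1 : R) = (1 - j) + r * d by rewrite hr; ring.
    by apply: (JD); [apply: (hIJ) | apply: (hJd)].
  exfalso.
  pose E := fun x : R => exists i t : R, I i /\ x = i + t * (1 - j).
  have hE : is_ideal E.
    split; first by exists 0, 0; split => //; ring.
      move=> a b [i1 [t1 [h1 ->]]] [i2 [t2 [h2 ->]]].
      by exists (i1 + i2), (t1 + t2); split; [apply: (ID) | ring].
    move=> a b [i [t [h ->]]]; exists (a * i), (a * t); split; [exact: IM | ring].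
  have hIE : forall x, I x -> E x by move=> x hx; exists x, 0; split => //; ring.
  have hEc : exists x, E x /\ ~ I x.
    exists (1 - j); split => //; exists 0, 1; split => //; ring.
  have [e he] := SP E hE hIE hEc.
  have [i0 [t0 [hi0 ee]]] : E e by apply/he; exists 1; rewrite mul1r.
  have L2 := L e (fun x hx => (he x).1 (hIE x hx)).
  have hgI : is_ideal (gen s) := gen_ideal s.
  have hN2 : forall x, List.In x s -> Jgen (gen s) s x.
    move=> x hx; have [y [hy ey]] := L2 x (hsI x hx).
    have -> : x = i0 * y.
      have hcy := hc y hy.
      rewrite ey ee; transitivity (i0 * y + t0 * ((1 - j) * y)); first ring.
      by rewrite hcy; ring.
    by apply: gen_Jgen => //; apply/hs.
  have [j2 [hj2 hj2x]] := @nakayama R _ s hgI hN2.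
  apply: (hnI); exists j2 => x; split.
  + move=> hx; exists x; have := hj2x x ((hs x).1 hx).
    by move/eqP; rewrite mulrBl mul1r subr_eq0 => /eqP {1}->; rewrite mulrC.
  + by move=> [r' ->]; apply: (IM); apply/hs.
pose V := fun K : ideal R => zbasic s K /\ ~ zbasic [:: 1] K.
have hV : constructible_open V.
  move=> O [_ Oint _] HS; apply: (Oint); apply: (HS).
  - exists (zbasic s); have [h1 h2] := zbasic_open s; split => //; by left.
  - exists (zbasic [:: (1 : R)]); have [h1 h2] := zbasic_open [:: (1 : R)]; split => //; by right.
pose Ir := @Ideal R I hI.
have [Kx [[hKs hK1] hKP]] : exists Kx, V Kx /\ Princ Kx.
  apply: (hD) => //; exists Ir; split; first by move=> x /hsI.
  by move=> h; apply: (I1); apply: (h); left.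
have hIK : forall x, I x -> Kx x.
  by move=> x /hs; apply: (@gen_min R s Kx (iprop Kx)).
case: (classic (exists x, Kx x /\ ~ I x)) => hex.
  by apply: (hK1) => y [<-|[]]; apply: (K) => //; exact: iprop.
apply: (hnI); have [a ha] := hKP; exists a => x; split.
- by move/hIK/ha.
- move/ha => hx; apply: NNPP => hnx; apply: (hex); by exists x.
Qed.
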